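(* Consider a one-hidden-layer network with $M$ hidden neurons, weight vectors $w_1,\dots,w_M\in\mathbb{R}^N$ and biases $b_1,\dots,b_M$, with input $x\in\mathbb{R}^N$ and perturbation $e\in\mathbb{R}^N$ with $\|e\|_\infty\le\delta$. Assume: (1) $\|x\|_2=1$ and $\|x\|_\infty=o(1)$ as $N\to\infty$; (2) $\delta\le |b_i|/\|w_i\|_1-C$ for all $i=1,\dots,M$, for some constant $C>0$ independent of $N$; (3) $M=\omega(1)$ as $N\to\infty$; (4) for each $i$, the entries $w_i[k]$, $k=1,\dots,N$, are i.i.d. with zero mean and variance $\sigma_i^2=\Theta(1)$. Let $S=\{i:|w_i^Tx-b_i|>|w_i^Te|\}$. Then $\lim_{N\to\infty}\Pr\left(|S|/M=1-o(1)\right)=1$.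
   Context: Asymptotic notation: $f=\Theta(g)$ if $C_1<|f/g|<C_2$ for constants $C_1,C_2>0$; $f=o(g)$ if $|f/g|\to0$; $f=\omega(g)$ if $g=o(f)$. For a neuron $i\in S$, the ReLU switch $s_i=\mathbb{1}\{w_i^Tx-b_i>0\}$ is unchanged when $x$ is replaced by $x+e$ (the ''high SNR'' condition). *)

(* Defs.v *)
From HB Require Import structures.
From mathcomp Require Import all_boot all_order all_algebra.
From mathcomp Require Import all_classical all_reals all_analysis.
Set Implicit Arguments. Unset Strict Implicit. Unset Printing Implicit Defensive.
Import Order.TTheory GRing.Theory Num.Theory.
Import numFieldNormedType.Exports.
Local Open Scope classical_set_scope.
Local Open Scope ring_scope.

Section Vectors.
Context {R : realType} {N : nat}.
Definition dotp (u v : 'I_N -> R) : R := \sum_(k < N) u k * v k.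
Definition norm1 (u : 'I_N -> R) : R := \sum_(k < N) `|u k|.
Definition norm2 (u : 'I_N -> R) : R := Num.sqrt (\sum_(k < N) u k ^+ 2).
Definition normInf (u : 'I_N -> R) : R := \big[Num.max/0]_(k < N) `|u k|.
End Vectors.

Definition robust_set {R : realType} (N M : nat) (w : 'I_M -> 'I_N -> R)
    (b : 'I_M -> R) (x e : 'I_N -> R) : {set 'I_M} :=
  [set i : 'I_M | `|dotp (w i) e| < `|dotp (w i) x - b i|].

(* Mutual independence of a finite family of real random variables:
   product rule for every family of Borel sets (sub-families are obtained
   by taking B k = setT). *)
Definition mutually_independent {d} {T : measurableType d} {R : realType}
    (P : probability T R) (n : nat) (X : 'I_n -> {RV P >-> R}) : Prop :=
  forall B : 'I_n -> set R, (forall k, measurable (B k)) ->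
    P (\big[setI/setT]_(k < n) (X k @^-1` B k)) =
    (\big[*%E/1%E]_(k < n) P (X k @^-1` B k))%E.

Definition identically_distributed {d} {T : measurableType d} {R : realType}
    (P : probability T R) (n : nat) (X : 'I_n -> {RV P >-> R}) : Prop :=
  forall k k' (A : set R), measurable A ->
    distribution P (X k) A = distribution P (X k') A.

(* Main.v *)
Require Import Defs.
From HB Require Import structures.
From mathcomp Require Import all_boot all_order all_algebra.
From mathcomp Require Import all_classical all_reals all_analysis.
From mathcomp Require Import lra.
Import Order.TTheory GRing.Theory Num.Theory.
Import numFieldNormedType.Exports.
Local Open Scope classical_set_scope.
Local Open Scope ring_scope.

Section Det.
Context {R : realType} {N : nat}.
Implicit Types u v : 'I_N -> R.

Lemma normInf_ge0 u : 0 <= normInf u.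
Proof. rewrite /normInf; exact: bigmax_ge_id. Qed.

Lemma le_normInf u k : `|u k| <= normInf u.
Proof. rewrite /normInf; exact: (le_bigmax 0 (fun k => `|u k|) k). Qed.

Lemma norm1_ge0 u : 0 <= norm1 u.
Proof. by rewrite /norm1 sumr_ge0. Qed.

Lemma dotp_bound u v : `|dotp u v| <= norm1 u * normInf v.
Proof.
rewrite /dotp /norm1 mulr_suml.
apply: le_trans (ler_norm_sum _ _ _) _.
apply: ler_sum => k _; rewrite normrM.
by apply: ler_wpM2l => //; apply: le_normInf.
Qed.

Lemma key (w x e : 'I_N -> R) (b delta C : R) :
  0 < C -> normInf e <= delta -> normInf x < C -> delta <= `|b| / norm1 w - C ->
  `|dotp w e| < `|dotp w x - b|.
Proof.
move=> C0 He Hx Hd.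
have e0 := normInf_ge0 e.
have n0 := norm1_ge0 w.
have [n1z|n1p] := eqVneq (norm1 w) 0.
  by move: Hd; rewrite n1z invr0 mulr0; lra.
have n1pos : 0 < norm1 w by rewrite lt0r n1p.
have h1 := dotp_bound w e.
have h2 := dotp_bound w x.
have h3 : norm1 w * normInf e <= norm1 w * delta by apply: ler_wpM2l.
have h4 : norm1 w * normInf x <= norm1 w * C by apply: ler_wpM2l => //; apply: ltW.
have h4' : norm1 w * normInf x < norm1 w * C by rewrite ltr_pM2l.
have h5 : norm1 w * delta <= `|b| - norm1 w * C.
  have -> : `|b| - norm1 w * C = norm1 w * (`|b| / norm1 w - C).
    by rewrite mulrBr mulrCA divff // mulr1.
  by apply: ler_wpM2l.
have h6 : `|b| <= `|b - dotp w x| + `|dotp w x|.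
  by rewrite -{1}(subrK (dotp w x) b) ler_normD.
rewrite distrC.
lra.
Qed.
End Det.
Section Meas.
Context {R : realType} {d : measure_display} {T : measurableType d}.

Lemma mlt (f g : T -> R) : measurable_fun setT f -> measurable_fun setT g ->
  measurable [set t | f t < g t].
Proof.
move=> mf mg.
have := measurable_realfun.measurable_fun_ltr mf mg measurableT (Y := [set true]) I.
by rewrite setTI.
Qed.

Lemma mdot (N : nat) (u v : 'I_N -> T -> R) :
  (forall k, measurable_fun setT (u k)) -> (forall k, measurable_fun setT (v k)) ->
  measurable_fun setT (fun t => dotp (fun k => u k t) (fun k => v k t)).
Proof.
move=> mu mv; rewrite /dotp.
apply: measurable_sum => k.
exact: measurable_realfun.measurable_funM.
Qed.
End Meas.

Lemma card_ratio (R : realType) (M : nat) (S : {set 'I_M}) : (0 < M)%N ->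
  (1 <= #|S|%:R / M%:R :> R) <-> (forall i, i \in S).
Proof.
move=> M0; rewrite ler_pdivlMr ?ltr0n // mul1r ler_nat; split.
- move=> h i; have: S == [set: 'I_M]%SET by rewrite eqEcard finset.subsetT cardsT card_ord h.
  by move/eqP->; rewrite finset.in_setT.
- move=> h; have -> : S = [set: 'I_M]%SET by apply/setP => i; rewrite finset.in_setT h.
  by rewrite cardsT card_ord.
Qed.

Theorem theorem3 (R : realType) (d : measure_display) (T : measurableType d)
  (P : probability T R)
  (M : nat -> nat)
  (w : forall N : nat, 'I_(M N) -> 'I_N -> {RV P >-> R})
  (b : forall N : nat, 'I_(M N) -> {RV P >-> R})
  (x : forall N : nat, 'I_N -> R)
  (e : forall N : nat, 'I_N -> {RV P >-> R})
  (delta : nat -> R) (C : R) (sigma : forall N : nat, 'I_(M N) -> R) :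
  (* perturbation: ||e||_oo <= delta *)
  (\forall N \near \oo, forall t : T, normInf (fun k => e N k t) <= delta N) ->
  (* (1) ||x||_2 = 1 and ||x||_oo = o(1) *)
  (\forall N \near \oo, norm2 (x N) = 1) ->
  (fun N => normInf (x N)) @ \oo --> (0 : R) ->
  (* (2) delta <= |b_i| / ||w_i||_1 - C for all i, with C > 0 independent of N *)
  0 < C ->
  (\forall N \near \oo, {ae P, forall t : T, forall i : 'I_(M N),
      delta N <= `|b N i t| / norm1 (fun k => w N i k t) - C}) ->
  (* (3) M = omega(1) *)
  (forall K : nat, \forall N \near \oo, (K <= M N)%N) ->
  (* (4) for each i, entries i.i.d., zero mean, variance sigma_i^2 = Theta(1) *)
  (forall N (i : 'I_(M N)), mutually_independent (w N i) /\
                            identically_distributed (w N i)) ->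
  (forall N (i : 'I_(M N)) (k : 'I_N),
      P.-integrable setT (EFin \o w N i k) /\
      ('E_P[w N i k] = 0)%E /\ ('V_P[w N i k] = ((sigma N i) ^+ 2)%:E)%E) ->
  (exists C1 C2 : R, 0 < C1 /\ 0 < C2 /\
     forall N (i : 'I_(M N)), C1 < sigma N i ^+ 2 < C2) ->
  (* conclusion: Pr(|S|/M >= 1 - o(1)) -> 1 *)
  exists eps : nat -> R, eps @ \oo --> (0 : R) /\
    (fun N => P [set t | 1 - eps N <=
        (#|robust_set (fun i k => w N i k t) (fun i => b N i t) (x N)
                       (fun k => e N k t)|%:R / (M N)%:R)])
      @ \oo --> 1%E.
Proof.
move=> He _ Hxinf C0 Hae HM _ _ _.
exists (fun=> 0); split; first exact: cvg_cst.
apply: cvg_near_cst.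
have HxC : \forall N \near \oo, normInf (x N) < C by exact: (cvgr_lt 0 Hxinf C C0).
apply: filterS (filterI He (filterI HxC (filterI (HM 1%N) Hae))).
move=> N [HeN [HxN [HMN [Nn [mNn PNn sub]]]]].
rewrite subr0.
set A := \bigcap_(i in [set: 'I_(M N)]) [set t | `|dotp (fun k => w N i k t) (fun k => e N k t)| < `|dotp (fun k => w N i k t) (x N) - b N i t|].
have -> : [set t | 1 <= #|robust_set (fun i k => w N i k t) (fun i => b N i t) (x N)
                       (fun k => e N k t)|%:R / (M N)%:R :> R] = A.
  apply/seteqP; split => t /=.
  - move=> /(card_ratio _ _ _ HMN) h i _ /=.
    by have := h i; rewrite inE.
  - move=> h; apply/(card_ratio _ _ _ HMN) => i; rewrite inE.
    exact: (h i I).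
have mA : measurable A.
  apply: fin_bigcap_measurable; first exact: finite_finset.
  move=> i _; apply: mlt.
  - apply: measurableT_comp; first exact: measurable_realfun.normr_measurable.
    by apply: mdot => k; exact: measurable_funPT.
  - apply: measurableT_comp; first exact: measurable_realfun.normr_measurable.
    apply: measurable_realfun.measurable_funB; last exact: measurable_funPT.
    by apply: mdot => k; [exact: measurable_funPT | exact: measurable_cst].
have sA : ~` Nn `<=` A.
  move=> t nt i _ /=.
  have Q : forall i : 'I_(M N), delta N <= `|b N i t| / norm1 (fun k => w N i k t) - C.
    apply: contra_notP nt => nq; apply: sub; exact: nq.
  exact: key C0 (HeN t) HxN (Q i).
apply/le_anti/andP; split; first exact: probability_le1.
have <- : P (~` Nn) = 1%E by rewrite probability_setC // PNn sube0.
apply: le_measure => //; rewrite inE //; exact: measurableC.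
Qed.
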